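(* If $\lambda<1-\frac1d$, then the unique fixed point $x^\star$ is given by $x^\star_{0,0}=1-\lambda-\frac1d$, $x^\star_{0,1}=\frac1d$, $x^\star_{1,1}=\lambda$ and $x^\star_{i,j}=0$ for all other $(i,j)$; in particular $x^\star_{0,0}>0$.
   Context: Fix $\lambda\in(0,1)$, an integer $d\ge2$ and an integer $I>1$. $\mathcal S=\{x=(x_{i,j})_{0\le i\le j\le I}: x_{i,j}\ge0,\ \sum_{i=0}^I\sum_{j=i}^I x_{i,j}=1\}$; $x_{i,\cdot}=\sum_{j=i}^I x_{i,j}$, $x_{\cdot,j}=\sum_{i=0}^j x_{i,j}$. For $0\le j\le I$: $\mathcal R_j(x)=\max\{0,\lambda(1-d\sum_{i=0}^j(j+1-i)x_{i,\cdot})\}\,\mathbf 1\{\sum_{i=0}^j x_{\cdot,i}=0\}$, $\mathcal G_j(x)=\lambda d\,\mathbf 1\{\sum_{i=0}^j x_{\cdot,i}=0,\ d\sum_{i=0}^j(j+1-i)x_{i,\cdot}\le1\}\sum_{i=0}^j x_{i,\cdot}$. Write $\rho_k^{a,b}(x)=\mathcal R_k(x)\frac{x_{a,b}}{x_{\cdot,b}}\mathbf 1\{x_{\cdot,b}>0\}$ (equal to $0$ when $x_{\cdot,b}=0$). The drift $b(x)$ is: $b_{0,0}=\lambda d(x_{0,\cdot}-x_{0,0})-\lambda+\mathcal R_0(x)$; for $i<j$: $b_{i,j}=x_{i+1,j}-\mathbf 1\{i>0\}x_{i,j}-\lambda d x_{i,j}-\rho_{j-1}^{i,j}+\mathbf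 1\{i>0\}\rho_{j-2}^{i-1,j-1}+\mathbf 1\{j=I,i>0\}\rho_{I-1}^{i-1,I}$; $b_{1,1}=-x_{1,1}+\lambda d(x_{1,\cdot}-x_{1,1})+\lambda-\mathcal R_0(x)-\rho_0^{1,1}-\mathcal G_1(x)$; for $2\le i\le I-1$: $b_{i,i}=-x_{i,i}+\lambda d(x_{i,\cdot}-x_{i,i})-\rho_{i-1}^{i,i}+\rho_{i-2}^{i-1,i-1}+\mathcal G_{i-1}(x)-\mathcal G_i(x)$; $b_{I,I}=-x_{I,I}+\rho_{I-2}^{I-1,I-1}+\mathcal G_{I-1}(x)+\rho_{I-1}^{I-1,I}$. A fluid solution is an absolutely continuous $x:\mathbb R_+\to\mathcal S$ with $\dot x_{i,j}(t)=b_{i,j}(x(t))$ for a.e. $t$ and all $i\le j$. A fixed point is a fluid solution with $b(x(t))=0$ for all $t\ge0$ (hence constant, identified with a point of $\mathcal S$); it is unique. *)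

(* Defs.v *)
From Stdlib Require Import Reals Lra Lia.
Open Scope R_scope.

(* A configuration x = (x_{i,j})_{0<=i<=j<=I} is represented as a function
   nat -> nat -> R; only the entries with i <= j <= I are meaningful. *)
Definition config := nat -> nat -> R.

Fixpoint sumN (n : nat) (f : nat -> R) : R :=
  match n with
  | O => 0
  | S m => sumN m f + f m
  end.

Definition ind (b : bool) : R := if b then 1 else 0.

Definition inS (I : nat) (x : config) : Prop :=
  (forall i j, (i <= j <= I)%nat -> 0 <= x i j) /\
  sumN (S I) (fun i => sumN (S I) (fun j => if Nat.leb i j then x i j else 0)) = 1.

Definition row (I : nat) (x : config) (i : nat) : R :=
  sumN (S I) (fun j => if Nat.leb i j then x i j else 0).

Definition col (x : config) (j : nat) : R := sumN (S j) (fun i => x i j).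

Definition wsum (I : nat) (x : config) (j : nat) : R :=
  sumN (S j) (fun i => INR (S j - i) * row I x i).

Definition colsum (x : config) (j : nat) : R := sumN (S j) (fun i => col x i).

Definition Rj (lam : R) (d I : nat) (x : config) (j : nat) : R :=
  Rmax 0 (lam * (1 - INR d * wsum I x j)) *
  (if Req_EM_T (colsum x j) 0 then 1 else 0).

Definition Gj (lam : R) (d I : nat) (x : config) (j : nat) : R :=
  lam * INR d *
  (if Req_EM_T (colsum x j) 0 then
     (if Rle_dec (INR d * wsum I x j) 1 then 1 else 0) else 0) *
  sumN (S j) (fun i => row I x i).

Definition rho (lam : R) (d I : nat) (x : config) (k a b : nat) : R :=
  if Req_EM_T (col x b) 0 then 0 else Rj lam d I x k * x a b / col x b.

Definition drift (lam : R) (d I : nat) (x : config) (i j : nat) : R :=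
  let dd := INR d in
  if andb (Nat.eqb i 0) (Nat.eqb j 0) then
    lam * dd * (row I x 0 - x 0%nat 0%nat) - lam + Rj lam d I x 0
  else if Nat.ltb i j then
    x (S i) j - ind (Nat.ltb 0 i) * x i j - lam * dd * x i j
    - rho lam d I x (j - 1) i j
    + ind (Nat.ltb 0 i) * rho lam d I x (j - 2) (i - 1) (j - 1)
    + ind (andb (Nat.eqb j I) (Nat.ltb 0 i)) * rho lam d I x (I - 1) (i - 1) I
  else if Nat.eqb i 1 then
    - x 1%nat 1%nat + lam * dd * (row I x 1 - x 1%nat 1%nat) + lam
    - Rj lam d I x 0 - rho lam d I x 0 1 1 - Gj lam d I x 1
  else if Nat.eqb i I then
    - x I I + rho lam d I x (I - 2) (I - 1) (I - 1) + Gj lam d I x (I - 1)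
    + rho lam d I x (I - 1) (I - 1) I
  else
    - x i i + lam * dd * (row I x i - x i i) - rho lam d I x (i - 1) i i
    + rho lam d I x (i - 2) (i - 1) (i - 1) + Gj lam d I x (i - 1) - Gj lam d I x i.

(* A fixed point: a point of S at which the drift vanishes (identified with
   the constant fluid solution). *)
Definition is_fixed_point (lam : R) (d I : nat) (x : config) : Prop :=
  inS I x /\ forall i j, (i <= j <= I)%nat -> drift lam d I x i j = 0.

Definition xstar (lam : R) (d : nat) : config :=
  fun i j =>
    match i, j with
    | 0%nat, 0%nat => 1 - lam - 1 / INR d
    | 0%nat, 1%nat => 1 / INR d
    | 1%nat, 1%nat => lam
    | _, _ => 0
    end.

(* Main.v *)
Require Import Defs.
From Stdlib Require Import Reals Lra Lia.
Open Scope R_scope.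

Lemma sumN_ext n f g : (forall i, (i < n)%nat -> f i = g i) -> sumN n f = sumN n g.
Proof. induction n; simpl; intros H; [reflexivity|]. rewrite IHn by (intros; apply H; lia). rewrite H by lia. reflexivity. Qed.
Lemma sumN_plus n f g : sumN n (fun i => f i + g i) = sumN n f + sumN n g.
Proof. induction n; simpl; [lra|]. rewrite IHn; ring. Qed.
Lemma sumN_minus n f g : sumN n (fun i => f i - g i) = sumN n f - sumN n g.
Proof. induction n; simpl; [lra|]. rewrite IHn; ring. Qed.
Lemma sumN_scal n c f : sumN n (fun i => c * f i) = c * sumN n f.
Proof. induction n; simpl; [lra|]. rewrite IHn; ring. Qed.
Lemma sumN_zero_on n f : (forall i, (i<n)%nat -> f i = 0) -> sumN n f = 0.
Proof. intros H. induction n; simpl; [lra|]. rewrite IHn by (intros; apply H; lia). rewrite H by lia. lra. Qed.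
Lemma sumN_nonneg n f : (forall i, (i<n)%nat -> 0 <= f i) -> 0 <= sumN n f.
Proof. intros H. induction n; simpl; [lra|]. assert (0 <= sumN n f) by (apply IHn; intros; apply H; lia). specialize (H n ltac:(lia)). lra. Qed.
Lemma sumN_shift n f : sumN (S n) f = f 0%nat + sumN n (fun i => f (S i)).
Proof. induction n. simpl; lra. change (sumN (S (S n)) f) with (sumN (S n) f + f (S n)). rewrite IHn. simpl. ring. Qed.
Lemma sumN_single n f k : (k < n)%nat -> (forall j, (j < n)%nat -> j <> k -> f j = 0) -> sumN n f = f k.
Proof. induction n; intros Hk H; [lia|]. simpl. destruct (Nat.eq_dec k n).
 - subst. rewrite sumN_zero_on; [lra|]. intros; apply H; lia.
 - rewrite IHn by (try lia; intros; apply H; lia). rewrite (H n) by lia. lra. Qed.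
Lemma sumN_first2 n f : (2 <= n)%nat -> (forall j, (2 <= j < n)%nat -> f j = 0) -> sumN n f = f 0%nat + f 1%nat.
Proof. induction n; intros Hn H; [lia|]. destruct (Nat.eq_dec n 1). subst. simpl. lra.
 simpl. rewrite IHn by (try lia; intros; apply H; lia). rewrite (H n) by lia. lra. Qed.
Lemma sumN_trunc n j f : sumN n (fun i => if Nat.leb i j then f i else 0) = sumN (Nat.min n (S j)) f.
Proof. induction n. simpl. reflexivity.
 simpl sumN at 1. rewrite IHn. destruct (Nat.leb_spec n j).
 - replace (Nat.min (S n) (S j)) with (S n) by lia. replace (Nat.min n (S j)) with n by lia. reflexivity.
 - replace (Nat.min (S n) (S j)) with (S j) by lia. replace (Nat.min n (S j)) with (S j) by lia. lra. Qed.
Lemma sumN_swap n m f : sumN n (fun i => sumN m (fun j => f i j)) = sumN m (fun j => sumN n (fun i => f i j)).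
Proof. induction n. simpl. rewrite sumN_zero_on; auto.
 simpl. rewrite IHn. rewrite <- sumN_plus. reflexivity. Qed.
Ltac bsimp := repeat match goal with
 | |- context [Nat.leb ?a ?b] => first [rewrite (proj2 (Nat.leb_le a b)) by lia | rewrite (proj2 (Nat.leb_gt a b)) by lia]
 | |- context [Nat.ltb ?a ?b] => first [rewrite (proj2 (Nat.ltb_lt a b)) by lia | rewrite (proj2 (Nat.ltb_ge a b)) by lia]
 | |- context [Nat.eqb ?a ?b] => first [rewrite (proj2 (Nat.eqb_eq a b)) by lia | rewrite (proj2 (Nat.eqb_neq a b)) by lia]
 end; cbn [andb].

Definition Qf lam d I x i := sumN (S I) (fun j => if andb (Nat.leb i j) (Nat.ltb 0 j) then rho lam d I x (j-1) i j else 0).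
Definition Bf lam d I x i := sumN (S I) (fun j => if Nat.leb i j then drift lam d I x i j else 0).
Definition Ef x j := if Req_EM_T (colsum x j) 0 then 1 else 0.
Definition Cf lam d I x j := sumN (S j) (fun i => rho lam d I x (j-1) i j).

Lemma sum_delta n k c : (k < n)%nat -> sumN n (fun j => if Nat.eqb j k then c else 0) = c.
Proof. intros H. rewrite (sumN_single _ _ k H). rewrite Nat.eqb_refl. reflexivity.
 intros j _ Hj. rewrite (proj2 (Nat.eqb_neq j k) Hj). reflexivity. Qed.

Lemma row0_sum lam d I x : Bf lam d I x 0 = row I x 1 - (lam - Rj lam d I x 0 + Qf lam d I x 0).
Proof.
 unfold Bf.
 rewrite (sumN_ext _ _ (fun j => ((if Nat.leb 1 j then x 1%nat j else 0)
    + lam * INR d * ((if Nat.eqb j 0 then row I x 0 else 0) - (if Nat.leb 0 j then x 0%nat j else 0))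
    - (if andb (Nat.leb 0 j) (Nat.ltb 0 j) then rho lam d I x (j-1) 0 j else 0))
    + (if Nat.eqb j 0 then -lam + Rj lam d I x 0 else 0))).
 - rewrite sumN_plus, sumN_minus, sumN_plus, sumN_scal, sumN_minus, !sum_delta by lia.
   unfold row, Qf. ring.
 - intros j Hj. destruct j.
   + unfold drift. bsimp. ring.
   + unfold drift. bsimp. unfold Defs.ind. rewrite ?Bool.andb_false_r. ring.
Qed.

Lemma in_sum lam d I x i : (1 <= i)%nat -> (i <= I)%nat ->
 sumN (S I) (fun j => if Nat.leb i j then (if Nat.ltb 0 (j-1) then rho lam d I x (j-2) (i-1) (j-1) else 0) else 0) + rho lam d I x (I-1) (i-1) I = Qf lam d I x (i-1).
Proof. intros H1 H2. unfold Qf. rewrite sumN_shift.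
 change (sumN (S I) ?f) with (sumN I f + f I). cbv beta. bsimp.
 rewrite Rplus_0_l. f_equal. apply sumN_ext. intros j Hj.
 replace (S j - 1)%nat with j by lia. replace (S j - 2)%nat with (j-1)%nat by lia.
 destruct (Nat.leb_spec (i-1) j), (Nat.ltb_spec 0 j); bsimp; reflexivity. Qed.

Lemma rowmid_sum lam d I x i : (1 <= i)%nat -> (i < I)%nat ->
  Bf lam d I x i = row I x (S i) - row I x i - Qf lam d I x i + Qf lam d I x (i-1)
     + (if Nat.eqb i 1 then lam - Rj lam d I x 0 - Gj lam d I x 1 else Gj lam d I x (i-1) - Gj lam d I x i).
Proof.
 intros Hi1 HiI. unfold Bf.
 rewrite (sumN_ext _ _ (fun j => ((((if Nat.leb (S i) j then x (S i) j else 0)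
    - (if Nat.leb i j then x i j else 0))
    + lam * INR d * ((if Nat.eqb j i then row I x i else 0) - (if Nat.leb i j then x i j else 0)))
    - (if andb (Nat.leb i j) (Nat.ltb 0 j) then rho lam d I x (j-1) i j else 0))
    + ((if Nat.leb i j then (if Nat.ltb 0 (j-1) then rho lam d I x (j-2) (i-1) (j-1) else 0) else 0)
       + (if Nat.eqb j I then rho lam d I x (I-1) (i-1) I else 0))
    + (if Nat.eqb j i then (if Nat.eqb i 1 then lam - Rj lam d I x 0 - Gj lam d I x 1 else Gj lam d I x (i-1) - Gj lam d I x i) else 0))).
 - rewrite sumN_plus, sumN_plus, sumN_minus, sumN_plus, sumN_minus, sumN_scal, sumN_minus, !sum_delta by lia.
   rewrite sumN_plus, sum_delta by lia.
   rewrite <- (in_sum lam d I x i) by lia. unfold row, Qf. ring.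
 - intros j Hj. destruct (Nat.lt_total j i) as [H|[H|H]].
   + bsimp. ring.
   + subst j. destruct (Nat.eqb_spec i 1).
     * subst i. unfold drift. bsimp. simpl Nat.sub. ring.
     * unfold drift. bsimp. ring.
   + destruct (Nat.eqb_spec j I).
     * subst j. unfold drift. bsimp. unfold Defs.ind. rewrite ?Bool.andb_false_r, ?Bool.andb_true_r. ring.
     * unfold drift. bsimp. unfold Defs.ind. rewrite ?Bool.andb_false_r, ?Bool.andb_true_r. ring.
Qed.

Definition NN (I : nat) (x : config) := forall i j, (i <= j <= I)%nat -> 0 <= x i j.

Lemma col_nonneg I x j : NN I x -> (j <= I)%nat -> 0 <= col x j.
Proof. intros H Hj. unfold col. apply sumN_nonneg. intros i Hi. apply H. lia. Qed.
Lemma colsum_nonneg I x j : NN I x -> (j <= I)%nat -> 0 <= colsum x j.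
Proof. intros H Hj. unfold colsum. apply sumN_nonneg. intros i Hi. apply (col_nonneg I). auto. lia. Qed.
Lemma row_nonneg I x i : NN I x -> 0 <= row I x i.
Proof. intros H. unfold row. apply sumN_nonneg. intros j Hj. destruct (Nat.leb_spec i j). apply H; lia. lra. Qed.
Lemma wsum_S I x k : wsum I x (S k) = wsum I x k + sumN (S (S k)) (fun i => row I x i).
Proof. unfold wsum. change (sumN (S (S k)) ?f) with (sumN (S k) f + f (S k)). cbv beta.
 replace (S (S k) - S k)%nat with 1%nat by lia.
 rewrite (sumN_ext (S k) (fun i => INR (S (S k) - i) * row I x i) (fun i => INR (S k - i) * row I x i + row I x i)).
 rewrite sumN_plus. change (INR 1) with 1. change (sumN (S k) (fun i => row I x i)) with (sumN (S k) (row I x)). ring.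
 intros i Hi. replace (S (S k) - i)%nat with (S (S k - i)) by lia. rewrite S_INR. ring. Qed.
Lemma Rj_nonneg lam d I x k : 0 <= Rj lam d I x k.
Proof. unfold Rj. apply Rmult_le_pos. apply Rmax_l. destruct Req_EM_T; lra. Qed.
Lemma rho_nonneg lam d I x k a b : NN I x -> (a <= b <= I)%nat -> 0 <= rho lam d I x k a b.
Proof. intros H Hab. unfold rho. destruct Req_EM_T. lra.
 assert (0 <= col x b) by (apply (col_nonneg I); auto; lia).
 unfold Rdiv. apply Rmult_le_pos. apply Rmult_le_pos. apply Rj_nonneg. apply H; lia.
 left. apply Rinv_0_lt_compat. lra. Qed.

Lemma C_bound lam d I x j : NN I x -> (j < I)%nat ->
  Cf lam d I x (S j) <= Rj lam d I x j - Rj lam d I x j * Ef x (S j).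
Proof. intros H Hj. unfold Cf. replace (S j - 1)%nat with j by lia. unfold rho.
 assert (HR := Rj_nonneg lam d I x j).
 destruct (Req_EM_T (col x (S j)) 0) as [e|e].
 - rewrite sumN_zero_on by auto. unfold Ef. destruct Req_EM_T; nra.
 - assert (0 <= col x (S j)) by (apply (col_nonneg I); auto; lia).
   assert (0 <= colsum x j) by (apply (colsum_nonneg I); auto; lia).
   assert (Hcs : colsum x (S j) = colsum x j + col x (S j)) by reflexivity.
   unfold Ef. destruct Req_EM_T as [e2|e2]. lra.
   rewrite (sumN_ext _ _ (fun i => (Rj lam d I x j / col x (S j)) * x i (S j))).
   rewrite sumN_scal. fold (col x (S j)). field_simplify; [lra|auto].
   intros. unfold Rdiv. ring. Qed.

Lemma G_bound lam d I x m : NN I x -> 0 < lam -> (m < I)%nat ->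
  Gj lam d I x (S m) <= Rj lam d I x m * Ef x (S m) - Rj lam d I x (S m).
Proof. intros H Hl Hm.
 assert (0 <= col x (S m)) by (apply (col_nonneg I); auto; lia).
 assert (0 <= colsum x m) by (apply (colsum_nonneg I); auto; lia).
 assert (Hcs : colsum x (S m) = colsum x m + col x (S m)) by reflexivity.
 assert (Hs : 0 <= sumN (S (S m)) (fun i => row I x i)) by (apply sumN_nonneg; intros; apply row_nonneg; auto).
 assert (Hd : 0 <= INR d) by apply pos_INR.
 assert (Hw : 0 <= wsum I x m) by (unfold wsum; apply sumN_nonneg; intros; apply Rmult_le_pos; [apply pos_INR|apply row_nonneg; auto]).
 assert (HW := wsum_S I x m).
 unfold Gj, Rj, Ef.
 destruct (Req_EM_T (colsum x (S m)) 0) as [e|e].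
 - destruct (Req_EM_T (colsum x m) 0) as [e2|e2]; [|lra].
   destruct (Rle_dec (INR d * wsum I x (S m)) 1).
   + assert (INR d * wsum I x m <= 1) by (rewrite HW in r; assert (0 <= INR d * sumN (S (S m)) (fun i => row I x i)) by (apply Rmult_le_pos; lra); lra).
     rewrite (Rmax_right 0 (lam * (1 - INR d * wsum I x m))) by (apply Rmult_le_pos; lra).
     rewrite (Rmax_right 0 (lam * (1 - INR d * wsum I x (S m)))) by (apply Rmult_le_pos; lra).
     rewrite HW. ring_simplify. lra.
   + rewrite (Rmax_left 0 (lam * (1 - INR d * wsum I x (S m)))) by nra.
     assert (0 <= Rmax 0 (lam * (1 - INR d * wsum I x m))) by apply Rmax_l. nra.
 - assert (0 <= Rmax 0 (lam * (1 - INR d * wsum I x m))) by apply Rmax_l. nra.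
Qed.

Lemma telesc lam d I x n : NN I x -> 0 < lam -> (n < I)%nat ->
  sumN (S n) (fun j => Cf lam d I x (S j)) + sumN n (fun k => Gj lam d I x (S k))
   <= Rj lam d I x 0 - Rj lam d I x n * Ef x (S n).
Proof. intros H Hl. induction n; intros Hn.
 - simpl. pose proof (C_bound lam d I x 0 H Hn). lra.
 - change (sumN (S (S n)) ?f) with (sumN (S n) f + f (S n)).
   change (sumN (S n) (fun k => Gj lam d I x (S k))) with (sumN n (fun k => Gj lam d I x (S k)) + Gj lam d I x (S n)).
   pose proof (C_bound lam d I x (S n) H Hn). pose proof (G_bound lam d I x n H Hl ltac:(lia)).
   specialize (IHn ltac:(lia)). lra.
Qed.

Lemma Q_exchange lam d I x : sumN (S I) (fun i => Qf lam d I x i) = sumN I (fun j => Cf lam d I x (S j)).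
Proof. unfold Qf. rewrite sumN_swap. rewrite sumN_shift.
 rewrite (sumN_zero_on (S I) (fun i => if ((i <=? 0) && (0 <? 0))%bool then rho lam d I x (0 - 1) i 0 else 0)).
 2:{ intros i _. rewrite Bool.andb_false_r. reflexivity. }
 rewrite Rplus_0_l. apply sumN_ext. intros j Hj.
 rewrite (sumN_ext _ _ (fun i => if Nat.leb i (S j) then rho lam d I x (S j - 1) i (S j) else 0)).
 2:{ intros i _. rewrite Bool.andb_true_r. reflexivity. }
 rewrite sumN_trunc. replace (Nat.min (S I) (S (S j))) with (S (S j)) by lia. reflexivity. Qed.

Definition Ff lam d I x k := if Nat.eqb k 0 then lam - Rj lam d I x 0 + Qf lam d I x 0 else Qf lam d I x k + Gj lam d I x k.

Lemma fp_NN lam d I x : is_fixed_point lam d I x -> NN I x.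
Proof. intros [[H _] _]. exact H. Qed.

Lemma Bzero lam d I x i : is_fixed_point lam d I x -> Bf lam d I x i = 0.
Proof. intros [_ H]. unfold Bf. apply sumN_zero_on. intros j Hj. destruct (Nat.leb_spec i j). apply H; lia. reflexivity. Qed.

Lemma F_eq lam d I x : is_fixed_point lam d I x -> forall k, (k < I)%nat -> Ff lam d I x k = row I x (S k).
Proof. intros Hf. induction k; intros Hk.
 - pose proof (row0_sum lam d I x). rewrite (Bzero lam d I x 0 Hf) in H. unfold Ff. simpl. lra.
 - pose proof (rowmid_sum lam d I x (S k) ltac:(lia) ltac:(lia)) as H.
   rewrite (Bzero lam d I x (S k) Hf) in H. specialize (IHk ltac:(lia)).
   replace (S k - 1)%nat with k in H by lia. unfold Ff in *. destruct k.
   + simpl in *. lra.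
   + simpl Nat.eqb in *. cbv iota in *. lra.
Qed.

Lemma sumN_shift' n f : (0 < n)%nat -> sumN n f = f 0%nat + sumN (n-1) (fun i => f (S i)).
Proof. intros H. replace n with (S (n-1)) at 1 by lia. apply sumN_shift. Qed.

Lemma rows_le lam d I x : is_fixed_point lam d I x -> 0 < lam -> (1 < I)%nat ->
  sumN I (fun i => row I x (S i)) <= lam.
Proof. intros Hf Hl HI. pose proof (fp_NN _ _ _ _ Hf) as HN.
 rewrite (sumN_ext _ _ (Ff lam d I x)) by (intros; symmetry; apply F_eq; auto).
 rewrite sumN_shift' by lia.
 rewrite (sumN_ext _ _ (fun i => Qf lam d I x (S i) + Gj lam d I x (S i))) by (intros; reflexivity).
 rewrite sumN_plus. unfold Ff at 1. simpl Nat.eqb. cbv iota.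
 assert (HQ : Qf lam d I x 0 + sumN (I-1) (fun i => Qf lam d I x (S i)) = sumN I (Qf lam d I x)) by (symmetry; apply sumN_shift'; lia).
 assert (HQI : 0 <= Qf lam d I x I).
 { unfold Qf. apply sumN_nonneg. intros j Hj. destruct (Nat.leb_spec I j); cbn [andb].
   destruct (Nat.ltb 0 j). apply rho_nonneg; auto; lia. lra. lra. }
 assert (HX := Q_exchange lam d I x). change (sumN (S I) ?f) with (sumN I f + f I) in HX.
 assert (HT := telesc lam d I x (I-1) HN Hl ltac:(lia)).
 replace (S (I-1)) with I in HT by lia.
 assert (0 <= Rj lam d I x (I-1) * Ef x I).
 { apply Rmult_le_pos. apply Rj_nonneg. unfold Ef; destruct Req_EM_T; lra. }
 change (sumN I (fun i => Qf lam d I x i)) with (sumN I (Qf lam d I x)) in HX.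
 lra.
Qed.

Lemma x00_pos lam d I x : is_fixed_point lam d I x -> 0 < lam -> (2 <= d)%nat -> (1 < I)%nat ->
  lam < 1 - 1 / INR d -> 0 < x 0%nat 0%nat.
Proof. intros Hf Hl Hd HI Hlam.
 assert (HN := fp_NN _ _ _ _ Hf).
 destruct (HN 0%nat 0%nat ltac:(lia)) as [|He]; auto. exfalso. symmetry in He.
 assert (Hr := rows_le lam d I x Hf Hl HI).
 destruct Hf as [[_ Hsum] Hdr].
 fold (row I x) in Hsum. rewrite sumN_shift in Hsum.
 assert (HdR : 2 <= INR d) by (replace 2 with (INR 2) by reflexivity; apply le_INR; auto).
 assert (H1 : 1 < INR d * (1 - lam)).
 { assert (1 / INR d * INR d = 1) by (field; lra). nra. }
 specialize (Hdr 0%nat 0%nat ltac:(lia)). unfold drift in Hdr. simpl in Hdr.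
 assert (Hc : colsum x 0 = 0) by (unfold colsum, col; simpl; lra).
 assert (Hw : wsum I x 0 = row I x 0) by (unfold wsum; simpl; lra).
 assert (Hr0 : INR d * row I x 0 > 1) by nra.
 unfold Rj in Hdr. rewrite Hc, Hw in Hdr. destruct (Req_EM_T 0 0) as [_|n]; [|lra].
 rewrite Rmax_left in Hdr by nra. rewrite He in Hdr.
 assert (lam * (INR d * row I x 0 - 1) = 0) by lra.
 assert (lam * (INR d * row I x 0 - 1) > 0) by (apply Rmult_lt_0_compat; lra). lra.
Qed.

Lemma colsum_ge I x k : NN I x -> (k <= I)%nat -> x 0%nat 0%nat <= colsum x k.
Proof. intros H Hk. unfold colsum. rewrite sumN_shift.
 assert (0 <= sumN k (fun i => col x (S i))) by (apply sumN_nonneg; intros; apply (col_nonneg I); auto; lia).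
 unfold col at 1. simpl. lra. Qed.

Lemma Rz lam d I x k : NN I x -> 0 < x 0%nat 0%nat -> (k <= I)%nat -> Rj lam d I x k = 0.
Proof. intros H Hp Hk. pose proof (colsum_ge I x k H Hk). unfold Rj. destruct Req_EM_T. lra. ring. Qed.
Lemma Gz lam d I x k : NN I x -> 0 < x 0%nat 0%nat -> (k <= I)%nat -> Gj lam d I x k = 0.
Proof. intros H Hp Hk. pose proof (colsum_ge I x k H Hk). unfold Gj. destruct Req_EM_T. lra. ring. Qed.
Lemma rhoz lam d I x k a b : NN I x -> 0 < x 0%nat 0%nat -> (k <= I)%nat -> rho lam d I x k a b = 0.
Proof. intros H Hp Hk. unfold rho. destruct Req_EM_T. reflexivity. rewrite (Rz lam d I x k) by auto. unfold Rdiv. ring. Qed.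


Lemma uniq_pos lam d I x : is_fixed_point lam d I x -> 0 < lam -> (2 <= d)%nat -> (1 < I)%nat ->
  0 < x 0%nat 0%nat -> forall i j, (i <= j <= I)%nat -> x i j = xstar lam d i j.
Proof. intros Hf Hl Hd HI Hp.
 assert (HN := fp_NN _ _ _ _ Hf). destruct Hf as [[_ Hsum] Hdr].
 assert (HdR : 2 <= INR d) by (replace 2 with (INR 2) by reflexivity; apply le_INR; auto).
 assert (Hld : 0 < lam * INR d) by nra.
 assert (EQa : forall i j, (i < j <= I)%nat -> x (S i) j = (Defs.ind (Nat.ltb 0 i) + lam * INR d) * x i j).
 { intros i j Hij. pose proof (Hdr i j ltac:(lia)) as E. revert E. unfold drift.
   rewrite !(rhoz lam d I x) by (auto; lia). bsimp. rewrite Bool.andb_false_r. intros E. lra. }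
 assert (chain : forall j, (1 <= j <= I)%nat -> x j j = 0 -> forall i, (i <= j)%nat -> x i j = 0).
 { intros j Hj Hjj. assert (forall m i, (j - i = m)%nat -> (i <= j)%nat -> x i j = 0).
   { induction m; intros i Hm Hi. replace i with j by lia. auto.
     pose proof (EQa i j ltac:(lia)) as E. rewrite (IHm (S i)) in E by lia.
     assert (0 <= Defs.ind (Nat.ltb 0 i)) by (unfold Defs.ind; destruct Nat.ltb; lra).
     assert (Defs.ind (0 <? i) + lam * INR d <> 0) by lra.
     apply (Rmult_eq_reg_l (Defs.ind (0 <? i) + lam * INR d)); auto. lra. }
   intros i Hi. apply (H (j - i)%nat); auto. }
 assert (colz : forall k j, (2 <= j <= I)%nat -> (I - j <= k)%nat -> forall i, (i <= j)%nat -> x i j = 0).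
 { induction k; intros j Hj Hk.
   - replace j with I by lia. apply chain. lia.
     pose proof (Hdr I I ltac:(lia)) as E. revert E. unfold drift.
     rewrite !(rhoz lam d I x) by (auto; lia). rewrite !(Gz lam d I x) by (auto; lia). bsimp. intros; lra.
   - destruct (Nat.le_gt_cases (I - j) k). apply IHk; auto.
     apply chain. lia.
     assert (Hr : row I x j = x j j).
     { unfold row. rewrite (sumN_single _ _ j) by (first [lia | intros j' Hj' Hne; destruct (Nat.leb_spec j j');
         [apply (IHk j'); lia | reflexivity]]). bsimp. reflexivity. }
     pose proof (Hdr j j ltac:(lia)) as E. revert E. unfold drift.
     rewrite !(rhoz lam d I x) by (auto; lia). rewrite !(Gz lam d I x) by (auto; lia). bsimp. rewrite Hr.
     intros E. lra. }
 assert (Hr1 : row I x 1 = x 1%nat 1%nat).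
 { unfold row. rewrite (sumN_single _ _ 1) by (first [lia | intros j' Hj' Hne; destruct (Nat.leb_spec 1 j');
         [apply (colz I j'); lia | reflexivity]]). reflexivity. }
 assert (H11 : x 1%nat 1%nat = lam).
 { pose proof (Hdr 1%nat 1%nat ltac:(lia)) as E. revert E. unfold drift.
   rewrite !(rhoz lam d I x) by (auto; lia). rewrite !(Gz lam d I x) by (auto; lia). rewrite (Rz lam d I x) by (auto;lia).
   bsimp. rewrite Hr1. intros; lra. }
 assert (H01 : x 0%nat 1%nat = 1 / INR d).
 { pose proof (EQa 0%nat 1%nat ltac:(lia)) as E. unfold Defs.ind in E. change (0 <? 0)%nat with false in E. cbv iota in E.
   rewrite H11 in E.
   assert (Hx : INR d * x 0%nat 1%nat = 1).
   { apply (Rmult_eq_reg_l lam); [|lra]. rewrite Rmult_1_r. transitivity ((0 + lam * INR d) * x 0%nat 1%nat). ring. symmetry; exact E. }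
   apply (Rmult_eq_reg_l (INR d)); [rewrite Hx; field; lra | lra]. }
 assert (Htot : x 0%nat 0%nat + x 0%nat 1%nat + x 1%nat 1%nat = 1).
 { rewrite <- Hsum. rewrite sumN_first2 by (first [lia | intros i Hi; apply sumN_zero_on; intros j Hj;
     destruct (Nat.leb_spec i j); [apply (colz I j); lia | reflexivity]]).
   rewrite (sumN_first2 (S I) (fun j => if Nat.leb 0 j then x 0%nat j else 0)) by (first [lia | intros j Hj; bsimp; apply (colz I j); lia]).
   rewrite (sumN_first2 (S I) (fun j => if Nat.leb 1 j then x 1%nat j else 0)) by (first [lia | intros j Hj; bsimp; apply (colz I j); lia]).
   simpl. lra. }
 intros i j Hij. destruct j as [|[|j]].
 - replace i with 0%nat by lia. simpl. lra.
 - destruct i as [|[|i]]; [simpl; lra | simpl; lra | lia].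
 - rewrite (colz I (S (S j))) by lia. destruct i as [|[|i]]; reflexivity.
Qed.

Lemma xstar_nn lam d i j : 0 < lam -> (2 <= d)%nat -> lam < 1 - 1 / INR d -> 0 <= xstar lam d i j.
Proof. intros Hl Hd H. assert (HdR : 2 <= INR d) by (replace 2 with (INR 2) by reflexivity; apply le_INR; auto).
 assert (0 < 1 / INR d) by (apply Rdiv_lt_0_compat; lra).
 destruct i as [|[|i]]; destruct j as [|[|j]]; simpl; lra. Qed.

Lemma xstar_zero lam d i j : (2 <= j)%nat -> xstar lam d i j = 0.
Proof. intros H. destruct i as [|[|i]]; destruct j as [|[|j]]; try lia; reflexivity. Qed.
Lemma xstar_zero' lam d i j : (2 <= i)%nat -> xstar lam d i j = 0.
Proof. intros H. destruct i as [|[|i]]; try lia; reflexivity. Qed.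

Lemma exist_fp lam d I : 0 < lam < 1 -> (2 <= d)%nat -> (1 < I)%nat ->
  lam < 1 - 1 / INR d -> is_fixed_point lam d I (xstar lam d).
Proof. intros Hl Hd HI H.
 assert (HdR : 2 <= INR d) by (replace 2 with (INR 2) by reflexivity; apply le_INR; auto).
 assert (HN : NN I (xstar lam d)) by (intros i j _; apply xstar_nn; lra || auto).
 assert (Hp : 0 < xstar lam d 0%nat 0%nat) by (simpl; lra).
 assert (Hrow : forall i, row I (xstar lam d) i = if Nat.eqb i 0 then 1 - lam else if Nat.eqb i 1 then lam else 0).
 { intros i. unfold row. destruct i as [|[|i]].
   - rewrite sumN_first2 by (first [lia | intros; bsimp; apply xstar_zero; lia]). simpl. field. lra.
   - rewrite sumN_first2 by (first [lia | intros; bsimp; apply xstar_zero; lia]). simpl. lra.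
   - apply sumN_zero_on. intros j _. rewrite xstar_zero' by lia. destruct Nat.leb; reflexivity. }
 split; [split|].
 - exact HN.
 - rewrite sumN_first2. fold (row I (xstar lam d) 0). fold (row I (xstar lam d) 1). rewrite !Hrow. simpl. lra.
   lia. intros i Hi. fold (row I (xstar lam d) i). rewrite Hrow. bsimp. reflexivity.
 - intros i j Hij. unfold drift.
   rewrite !(rhoz lam d I (xstar lam d)) by (auto; lia).
   rewrite !(Gz lam d I (xstar lam d)) by (auto; lia).
   rewrite !(Rz lam d I (xstar lam d)) by (auto; lia).
   rewrite !Hrow. unfold Defs.ind.
   destruct i as [|[|i]].
   + destruct j as [|[|j]].
     * simpl. field. lra.
     * simpl. field. lra.
     * bsimp. rewrite !xstar_zero by lia. ring.
   + destruct j as [|[|j]]; [lia| |].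
     * bsimp. simpl. ring.
     * bsimp. rewrite !xstar_zero by lia. ring.
   + bsimp. rewrite !xstar_zero' by lia.
     destruct (Nat.ltb_spec (S (S i)) j); destruct (Nat.eqb_spec (S (S i)) I); destruct (Nat.eqb_spec j I); bsimp; ring.
Qed.

Theorem mainTheorem6 (lam : R) (d I : nat) :
  0 < lam < 1 -> (2 <= d)%nat -> (1 < I)%nat ->
  lam < 1 - 1 / INR d ->
  is_fixed_point lam d I (xstar lam d) /\
  (forall x : config, is_fixed_point lam d I x ->
     forall i j, (i <= j <= I)%nat -> x i j = xstar lam d i j) /\
  xstar lam d 0%nat 0%nat > 0.
Proof. intros Hl Hd HI H. split; [|split].
 - apply exist_fp; auto.
 - intros x Hf. apply uniq_pos; auto. lra. apply (x00_pos lam d I x); auto. lra.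
 - simpl. lra.
Qed.
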